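(* Let $H\in\mathbb{R}^{n\times n}$ be Hurwitz, and consider the stable LTI (reference) system $\dot x(t)=Hx(t)$, sampled with time step $h>0$, so that the reference trajectory satisfies $x_{ref}(n+1\,|\,k)=e^{Hh}x_{ref}(n\,|\,k)$, with $x_{ref}(0\,|\,k)$ the reference state at time $k$ (hence $x_{ref}(0\,|\,k+1)=x_{ref}(1\,|\,k)$). Consider the quantized system $x_q(k+1)=A_qx_q(k)+hB_qu(k)$, $x_q\in\mathbb{R}^n$, $B_q\in\mathbb{R}^{n\times m}$, $u(k)\in\{-1,0,1\}^m$, controlled by the QS-MPC law: at each time $k$, solve $$\min_{u_{0|k},\dots,u_{N-1|k}} J(x_q(k),U(k))=|x_{N|k}-x_{ref}(N|k)|_P^2+\sum_{n=0}^{N-1}\Big(|x_{n|k}-x_{ref}(n|k)|_Q^2+|u_{n|k}|_R^2\Big)$$ subject to $u_{n|k}\in\{-1,0,1\}^m$, $x_{0|k}=x_q(k)$, $x_{n+1|k}=A_qx_{n|k}+hB_qu_{n|k}$, $x_{ref}(n+1|k)=e^{Hh}x_{ref}(n|k)$ for $n=0,\dots,N-1$, and apply $u(k)=u^*_{0|k}$, the first element of an optimal sequence $U^*(k)$. Here $P,Q,R$ are symmetric positive definite, $N\ge 1$ is the prediction horizon, and $|x|_P^2=x^TPx$. If (a) $A_q=e^{Hh}$, and (b) the symmetric positive definite matrices $P,Q$ satisfy $Q-P+A_q^TPA_q\prec 0$, then the QS-MPC closed-loop solution is asymptotically stable (the quantized system asymptotically emulates the LTI system and converges to its equilibrium).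
   Context: QS-MPC denotes the model predictive control scheme for the quantized system described in the claim, used to emulate the continuous-time LTI system $\dot x=Hx$ (obtained from $\dot x=Ax+Bu$ with stabilizing feedback $u=Kx$, $H=A+BK$). $\prec 0$ means negative definite. The equilibrium of the LTI system is the origin. *)

(* Defs.v *)
From HB Require Import structures.
From mathcomp Require Import all_boot all_order all_algebra.
From mathcomp Require Import all_classical all_reals all_analysis.
From mathcomp Require Import complex.
Set Implicit Arguments. Unset Strict Implicit. Unset Printing Implicit Defensive.
Import Order.TTheory GRing.Theory Num.Theory.
Import numFieldNormedType.Exports.
Local Open Scope ring_scope.
Local Open Scope complex_scope.

Section Defs.
Variable R : realType.

Definition expmx (n : nat) (A : 'M[R]_n) : 'M[R]_n :=
  limn (series (fun k : nat => (k`!%:R)^-1 *: A ^+ k)).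

Definition hurwitz (n : nat) (H : 'M[R]_n) : Prop :=
  forall l : R[i], eigenvalue (map_mx (fun x : R => x%:C) H) l -> Re l < 0.

Definition qform (n : nat) (P : 'M[R]_n) (x : 'cV[R]_n) : R :=
  (x^T *m P *m x) 0 0.

Definition sym_mx (n : nat) (P : 'M[R]_n) : Prop := P^T = P.

Definition posdef (n : nat) (P : 'M[R]_n) : Prop :=
  sym_mx P /\ forall x : 'cV[R]_n, x != 0 -> 0 < qform P x.

Definition negdef (n : nat) (M : 'M[R]_n) : Prop :=
  sym_mx M /\ forall x : 'cV[R]_n, x != 0 -> qform M x < 0.

Definition quant_input (m : nat) (u : 'cV[R]_m) : Prop :=
  forall i, u i 0 \in [:: -1; 0; 1].

(** Admissible input sequence over the horizon N (entries beyond N unused). *)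
Definition admissible (m N : nat) (U : nat -> 'cV[R]_m) : Prop :=
  forall j, (j < N)%N -> quant_input (U j).

Fixpoint pred_state (n m : nat) (Aq : 'M[R]_n) (Bq : 'M[R]_(n, m)) (h : R)
  (x0 : 'cV[R]_n) (U : nat -> 'cV[R]_m) (j : nat) : 'cV[R]_n :=
  match j with
  | 0 => x0
  | j'.+1 => Aq *m pred_state Aq Bq h x0 U j' + h *: (Bq *m U j')
  end.

Fixpoint pred_ref (n : nat) (Ad : 'M[R]_n) (xr0 : 'cV[R]_n) (j : nat)
  : 'cV[R]_n :=
  match j with
  | 0 => xr0
  | j'.+1 => Ad *m pred_ref Ad xr0 j'
  end.

Definition mpc_cost (n m N : nat) (Aq : 'M[R]_n) (Bq : 'M[R]_(n, m)) (h : R)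
  (Ad P Q : 'M[R]_n) (Rw : 'M[R]_m) (x0 xr0 : 'cV[R]_n)
  (U : nat -> 'cV[R]_m) : R :=
  qform P (pred_state Aq Bq h x0 U N - pred_ref Ad xr0 N)
  + \sum_(j < N) (qform Q (pred_state Aq Bq h x0 U j - pred_ref Ad xr0 j)
                  + qform Rw (U j)).

Definition mpc_optimal (n m N : nat) (Aq : 'M[R]_n) (Bq : 'M[R]_(n, m)) (h : R)
  (Ad P Q : 'M[R]_n) (Rw : 'M[R]_m) (x0 xr0 : 'cV[R]_n)
  (U : nat -> 'cV[R]_m) : Prop :=
  admissible N U /\
  forall V, admissible N V ->
    mpc_cost N Aq Bq h Ad P Q Rw x0 xr0 U <= mpc_cost N Aq Bq h Ad P Q Rw x0 xr0 V.

Definition qsmpc_closed_loop (n m N : nat) (H Aq : 'M[R]_n) (Bq : 'M[R]_(n, m))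
  (h : R) (P Q : 'M[R]_n) (Rw : 'M[R]_m)
  (xq xr : nat -> 'cV[R]_n) (u : nat -> 'cV[R]_m) : Prop :=
  forall k,
    xr k.+1 = expmx (h *: H) *m xr k /\
    xq k.+1 = Aq *m xq k + h *: (Bq *m u k) /\
    exists U, mpc_optimal N Aq Bq h (expmx (h *: H)) P Q Rw (xq k) (xr k) U
              /\ U 0%N = u k.

End Defs.

(* Main.v *)
Require Import Defs.
From HB Require Import structures.
From mathcomp Require Import all_boot all_order all_algebra.
From mathcomp Require Import all_classical all_reals all_analysis.
From mathcomp Require Import complex.
From mathcomp Require Import ring lra.
Import Order.TTheory GRing.Theory Num.Theory.
Import numFieldNormedType.Exports.
Local Open Scope ring_scope.
Local Open Scope classical_set_scope.

Set Implicit Arguments. Unset Strict Implicit.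
Section Aux.
Variable R : realType.

Definition gq (n : nat) (M : 'M[R]_n) (y : 'rV[R]_n) : R :=
  \sum_j (\sum_i y 0 i * M i j) * y 0 j.

Lemma gq_cont n (M : 'M[R]_n) : continuous (gq M).
Proof.
rewrite /gq.
apply: (@continuous_big _ _ +%R 0 xpredT _ _ (index_enum _)).
  exact: add_continuous.
move=> j _ y; apply: continuousM; last exact: coord_continuous.
apply: (@continuous_big _ _ +%R 0 xpredT _ _ (index_enum _)).
  exact: add_continuous.
move=> i _ z; apply: continuousM; first exact: coord_continuous.
exact: cst_continuous.
Qed.

Lemma qform_gq n (M : 'M[R]_n) x : qform M x = gq M x^T.
Proof.
rewrite /qform /gq !mxE; apply: eq_bigr => j _; rewrite !mxE.
congr (_ * _); apply: eq_bigr => i _; rewrite !mxE //.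
Qed.

Lemma norm_tr_le m n (x : 'M[R]_(m, n)) : `|x^T| <= `|x|.
Proof.
rewrite /Num.norm /= !mx_normrE.
apply: bigmax_le => [|ij _]; first by rewrite -mx_normrE; exact: (normr_ge0 x).
rewrite mxE.
exact: (le_bigmax _ _ (ij.2, ij.1)).
Qed.

Lemma norm_tr m n (x : 'M[R]_(m, n)) : `|x^T| = `|x|.
Proof.
apply/eqP; rewrite eq_le norm_tr_le /=.
by rewrite -{1}(trmxK x) norm_tr_le.
Qed.


Lemma qform0 n (M : 'M[R]_n) : qform M 0 = 0.
Proof. by rewrite /qform mulmx0 mxE. Qed.

Lemma qformZ n (M : 'M[R]_n) a x : qform M (a *: x) = a ^+ 2 * qform M x.
Proof.
rewrite /qform -scalemxAr [(a *: x)^T]linearZ /= -!scalemxAl scalerA mxE.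
by rewrite expr2.
Qed.

Lemma qform_bounds n (M : 'M[R]_n) :
  exists2 c1, (posdef M -> 0 < c1) & exists c2,
    forall x, c1 * `|x| ^+ 2 <= qform M x /\ qform M x <= c2 * `|x| ^+ 2.
Proof.
case: (pselect (exists x : 'cV[R]_n, x != 0)) => [[x0 x0n0]|nox]; last first.
  exists 1 => // ; exists 1 => x.
  have -> : x = 0 by apply/eqP/negPn/negP => xn0; apply: nox; exists x.
  by rewrite qform0 normr0 expr0n /= !mulr0.
pose S := [set y : 'rV[R]_n | `|y| = 1].
have nx (x : 'cV[R]_n) : x != 0 -> `|(`|x|^-1 *: x)^T| = 1.
  move=> xn0; rewrite norm_tr mx_normZ normfV normr_id mulVf //.
  by rewrite normr_eq0.
have S0 : S !=set0 by exists (`|x0|^-1 *: x0)^T; exact: nx.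
have cS : compact S.
  apply: bounded_closed_compact.
    exists 1; split; first by rewrite realE ler01.
    by move=> r r1 y /= ->; exact: ltW.
  have -> : S = (fun y : 'rV[R]_n => `|y|) @^-1` [set 1] by [].
  apply: preimage_closed; last exact: closed_eq.
  move=> y _; exact: norm_continuous.
have gc : {within S, continuous (gq M)} by apply: continuous_subspaceT; exact: gq_cont.
have [ymin yminS minP] := compact_EVT_min S0 cS gc.
have [ymax ymaxS maxP] := compact_EVT_max S0 cS gc.
exists (gq M ymin).
  move=> [_ pM]; rewrite -[ymin]trmxK -qform_gq; apply: pM.
  apply/negP => /eqP y0; move: yminS; rewrite inE /S /= -norm_tr y0 normr0.
  by move/eqP; rewrite eq_sym oner_eq0.
exists (gq M ymax) => x.
have [->|xn0] := eqVneq x 0.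
  by rewrite qform0 normr0 expr0n /= !mulr0.
have yS : (`|x|^-1 *: x)^T \in S by rewrite inE; exact: nx.
have e : qform M x = `|x| ^+ 2 * gq M (`|x|^-1 *: x)^T.
  rewrite -qform_gq qformZ mulrA -exprMn mulfV ?expr1n ?mul1r //.
  by rewrite normr_eq0.
have x2 : 0 <= `|x| ^+ 2 by rewrite exprn_ge0.
rewrite e; split.
  by rewrite mulrC; apply: (ler_wpM2l x2); exact: minP.
by rewrite [X in _ <= X]mulrC; apply: (ler_wpM2l x2); exact: maxP.
Qed.


Lemma posdef_ge0 n (M : 'M[R]_n) x : posdef M -> 0 <= qform M x.
Proof.
move=> [_ pM]; have [->|xn0] := eqVneq x 0; first by rewrite qform0.
exact/ltW/pM.
Qed.

Lemma series_to0 (a : nat -> R) (B : R) :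
  (forall k, 0 <= a k) -> (forall k, series a k <= B) -> a @ \oo --> 0.
Proof.
move=> a0 aB; apply: cvg_series_cvg_0; apply: nondecreasing_is_cvgn.
  move=> p q pq; rewrite /series /=.
  exact: (nondecreasing_series (P := xpredT) (m := 0%N) (fun k _ _ => a0 k)).
by exists B => _ [k _ <-]; exact: aB.
Qed.

Lemma vec_to0 n (v : nat -> 'cV[R]_n) (a : nat -> R) c :
  0 < c -> (forall k, c * `|v k| ^+ 2 <= a k) -> a @ \oo --> 0 ->
  v @ \oo --> (0 : 'cV[R]_n).
Proof.
move=> c0 cva /cvgr0Pnorm_lt ha; apply/cvgr0Pnorm_lt => eps eps0.
have ce : 0 < c * eps ^+ 2 by rewrite mulr_gt0 // exprn_gt0.
move: (ha _ ce); apply: filterS => k hk.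
have := cva k; have := ler_norm (a k); have := normr_ge0 (v k).
move: hk; set A := a k; set N := `|v k|; set D := `|A|.
move=> hk' N0 AD cN.
have : c * N ^+ 2 < c * eps ^+ 2 by lra.
rewrite ltr_pM2l // => h2; nra.
Qed.


Lemma qformD n (M1 M2 : 'M[R]_n) x : qform (M1 + M2) x = qform M1 x + qform M2 x.
Proof. by rewrite /qform mulmxDr mulmxDl mxE. Qed.

Lemma qformN n (M : 'M[R]_n) x : qform (- M) x = - qform M x.
Proof. by rewrite /qform mulmxN mulNmx mxE. Qed.

Lemma qformT n (A P : 'M[R]_n) x : qform (A^T *m P *m A) x = qform P (A *m x).
Proof. by rewrite /qform trmx_mul !mulmxA. Qed.

Lemma lyap n (A P Q : 'M[R]_n) e : negdef (Q - P + A^T *m P *m A) ->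
  qform P (A *m e) <= qform P e - qform Q e.
Proof.
move=> [_ nd]; have [->|en0] := eqVneq e 0.
  by rewrite mulmx0 !qform0 subr0.
have := nd e en0; rewrite qformD qformT qformD qformN; lra.
Qed.

Lemma pr_shift n (A : 'M[R]_n) r0 j :
  pred_ref A (A *m r0) j = pred_ref A r0 j.+1.
Proof. by elim: j => //= j ->. Qed.

Lemma ps_shift n m N (A : 'M[R]_n) (B : 'M[R]_(n, m)) h x0 U j :
  (j < N)%N ->
  pred_state A B h (A *m x0 + h *: (B *m U 0%N))
    (fun i => if (i.+1 < N)%N then U i.+1 else 0) j = pred_state A B h x0 U j.+1.
Proof.
elim: j => //= j IH jN.
by rewrite IH ?(ltnW jN) // jN.
Qed.

Lemma ps_zero n m (A : 'M[R]_n) (B : 'M[R]_(n, m)) h x0 r0 j :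
  pred_state A B h x0 (fun=> 0) j - pred_ref A r0 j = A ^+ j *m (x0 - r0).
Proof.
elim: j => [|j IH] /=; first by rewrite expr0 mul1mx.
by rewrite mulmx0 scaler0 addr0 -mulmxBr IH exprS mulmxA.
Qed.


Lemma cost_decrease n m N (A : 'M[R]_n) (B : 'M[R]_(n, m)) h (P Q : 'M[R]_n)
  (Rw : 'M[R]_m) x0 r0 U V :
  (1 <= N)%N -> posdef P -> posdef Q -> posdef Rw ->
  negdef (Q - P + A^T *m P *m A) ->
  mpc_optimal N A B h A P Q Rw x0 r0 U ->
  mpc_optimal N A B h A P Q Rw (A *m x0 + h *: (B *m U 0%N)) (A *m r0) V ->
  mpc_cost N A B h A P Q Rw (A *m x0 + h *: (B *m U 0%N)) (A *m r0) V
  <= mpc_cost N A B h A P Q Rw x0 r0 U - qform Q (x0 - r0).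
Proof.
case: N => // N' N1 pP pQ pR nd [Uad _] [_ Vopt].
pose W := fun i => if (i.+1 < N'.+1)%N then U i.+1 else (0 : 'cV[R]_m).
have Wad : admissible N'.+1 W.
  move=> j jN; rewrite /W; case: ifP => [jN'|_]; first exact: Uad.
  by move=> i; rewrite mxE !inE eqxx orbT.
apply: le_trans (Vopt W Wad) _.
rewrite /mpc_cost big_ord_recr big_ord_recl.
set E := fun j => pred_state A B h x0 U j - pred_ref A r0 j.
have hW : W N' = 0 by rewrite /W ltnn.
have ePN : pred_state A B h (A *m x0 + h *: (B *m U 0%N)) W N'.+1 -
    pred_ref A (A *m r0) N'.+1 = A *m E N'.+1.
  rewrite /= hW mulmx0 scaler0 addr0 ps_shift // pr_shift /E /= mulmxBr.
  by [].
have eQN : pred_state A B h (A *m x0 + h *: (B *m U 0%N)) W N' -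
    pred_ref A (A *m r0) N' = E N'.+1.
  by rewrite ps_shift // pr_shift.
rewrite ePN eQN hW qform0.
have -> : \sum_(i < N') (qform Q (pred_state A B h (A *m x0 + h *: (B *m U 0%N)) W
      (widen_ord (leqnSn N') i) - pred_ref A (A *m r0) (widen_ord (leqnSn N') i)) +
      qform Rw (W (widen_ord (leqnSn N') i)))
    = \sum_(i < N') (qform Q (pred_state A B h x0 U (lift ord0 i) -
      pred_ref A r0 (lift ord0 i)) + qform Rw (U (lift ord0 i))).
  apply: eq_bigr => i _; rewrite lift0 /=.
  rewrite ps_shift; last exact: (ltnW (ltn_ord i)).
  by rewrite pr_shift /W ltnS ltn_ord.
have := lyap (E N'.+1) nd.
have := posdef_ge0 (U 0%N) pR.
have e0 : qform Q (pred_state A B h x0 U ord0 - pred_ref A r0 ord0) = qform Q (x0 - r0) by [].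
rewrite e0 -/(E N'.+1).
set S := \sum_(i < N') _.
rewrite [Monoid.Law.sort _ _ _]/=.
move=> *; lra.
Qed.


Lemma cost_lb n m N (A : 'M[R]_n) (B : 'M[R]_(n, m)) h (P Q : 'M[R]_n)
  (Rw : 'M[R]_m) x0 r0 U :
  (1 <= N)%N -> posdef P -> posdef Q -> posdef Rw ->
  qform Q (x0 - r0) <= mpc_cost N A B h A P Q Rw x0 r0 U.
Proof.
case: N => // N' _ pP pQ pR.
rewrite /mpc_cost big_ord_recl.
have e0 : qform Q (pred_state A B h x0 U ord0 - pred_ref A r0 ord0) = qform Q (x0 - r0) by [].
rewrite e0.
have S0 : 0 <= \sum_(i < N') (qform Q (pred_state A B h x0 U (lift ord0 i) -
      pred_ref A r0 (lift ord0 i)) + qform Rw (U (lift ord0 i))).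
  by apply: sumr_ge0 => i _; apply: addr_ge0; apply: posdef_ge0.
move: S0; set S := \sum_(i < N') _.
have := posdef_ge0 (U 0%N) pR.
have := posdef_ge0 (pred_state A B h x0 U N'.+1 - pred_ref A r0 N'.+1) pP.
rewrite [Monoid.Law.sort _ _ _]/=.
move=> *; lra.
Qed.

Lemma cost_ub n m N (A : 'M[R]_n) (B : 'M[R]_(n, m)) h (P Q : 'M[R]_n)
  (Rw : 'M[R]_m) x0 r0 U :
  posdef P -> posdef Q -> posdef Rw -> negdef (Q - P + A^T *m P *m A) ->
  mpc_optimal N A B h A P Q Rw x0 r0 U ->
  mpc_cost N A B h A P Q Rw x0 r0 U <= N.+1%:R * qform P (x0 - r0).
Proof.
move=> pP pQ pR nd [_ Uopt].
have Zad : admissible N (fun=> (0 : 'cV[R]_m)).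
  by move=> j _ i; rewrite mxE !inE eqxx orbT.
apply: le_trans (Uopt _ Zad) _.
have QP y : qform Q y <= qform P y.
  have := lyap y nd; have := posdef_ge0 (A *m y) pP; lra.
have PA j : qform P (A ^+ j *m (x0 - r0)) <= qform P (x0 - r0).
  elim: j => [|j IH]; first by rewrite expr0 mul1mx.
  rewrite exprS -mulmxA; apply: le_trans (lyap _ nd) _.
  have := posdef_ge0 (A ^+ j *m (x0 - r0)) pQ; lra.
rewrite /mpc_cost ps_zero.
under eq_bigr => i _ do rewrite ps_zero qform0 addr0.
rewrite -nat1r mulrDl mul1r; apply: lerD; first exact: PA.
apply: (@le_trans _ _ (\sum_(i < N) qform P (x0 - r0))).
  by apply: ler_sum => i _; exact: le_trans (QP _) (PA i).
by rewrite sumr_const card_ord mulr_natl.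
Qed.


Lemma sq_small (a d c D eps : R) : 0 < c -> 0 <= D -> 0 <= a -> 0 <= d -> 0 < eps ->
  c * a ^+ 2 <= D * d ^+ 2 -> d <= eps * c / (c + D) -> a < eps.
Proof.
move=> c0 D0 a0 d0 e0 h1 h2.
have t0 : 0 < c + D by lra.
have h3 : d * (c + D) <= eps * c by rewrite -ler_pdivlMr.
have h4 : (d * (c + D)) ^+ 2 <= (eps * c) ^+ 2.
  by rewrite ler_sqr ?nnegrE //; [nra|nra].
have h5 : c * a ^+ 2 * (c + D) ^+ 2 <= D * (eps * c) ^+ 2.
  have h5a := ler_wpM2r (exprn_ge0 2 (ltW t0)) h1.
  have h5b := ler_wpM2l D0 h4.
  apply: le_trans h5a _; rewrite -mulrA -exprMn; exact: h5b.
have h6 : a ^+ 2 * (c + D) ^+ 2 <= D * c * eps ^+ 2.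
  rewrite -(ler_pM2l c0) mulrA; apply: le_trans h5 _.
  by rewrite le_eqVlt; apply/orP; left; apply/eqP; ring.
have h7 : (a * (c + D)) ^+ 2 < (eps * (c + D)) ^+ 2.
  have h8 : D * c < (c + D) ^+ 2 by rewrite expr2; nra.
  have h9 : D * c * eps ^+ 2 < (c + D) ^+ 2 * eps ^+ 2.
    by rewrite ltr_pM2r // exprn_gt0.
  rewrite !exprMn; lra.
have : a * (c + D) < eps * (c + D).
  by move: h7; rewrite ltr_sqr ?nnegrE //; nra.
by rewrite ltr_pM2r.
Qed.

End Aux.

Unset Implicit Arguments.
Theorem theorem1 (R : realType) (n m N : nat) (H : 'M[R]_n) (h : R)
  (Aq : 'M[R]_n) (Bq : 'M[R]_(n, m)) (P Q : 'M[R]_n) (Rw : 'M[R]_m) :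
  hurwitz H -> 0 < h -> (1 <= N)%N ->
  posdef P -> posdef Q -> posdef Rw ->
  Aq = expmx (h *: H) ->
  negdef (Q - P + Aq^T *m P *m Aq) ->
  (* Lyapunov stability of the origin of the closed loop (xq, xr) *)
  (forall eps : R, 0 < eps -> exists2 delta : R, 0 < delta &
     forall xq xr u, qsmpc_closed_loop N H Aq Bq h P Q Rw xq xr u ->
       `|xq 0%N| < delta -> `|xr 0%N| < delta ->
       forall k, `|xq k| < eps /\ `|xr k| < eps)
  /\
  (* attractivity: every closed-loop solution converges to the origin *)
  (forall xq xr u, qsmpc_closed_loop N H Aq Bq h P Q Rw xq xr u ->
     xq k @[k --> \oo] --> (0 : 'cV[R]_n) /\ xr k @[k --> \oo] --> (0 : 'cV[R]_n)).
Proof.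
move=> _ h0 N1 pP pQ pR eA nd.
have [c1Q c1Qp [c2Q bQ]] := qform_bounds Q.
have [c1P c1Pp [c2P bP]] := qform_bounds P.
have c1Q0 := c1Qp pQ; have c1P0 := c1Pp pP.
pose C := Num.max c2P 1.
have C1 : 1 <= C by rewrite le_max lexx orbT.
have bP' x : qform P x <= C * `|x| ^+ 2.
  apply: le_trans (bP x).2 _; apply: ler_wpM2r; first exact: exprn_ge0.
  by rewrite le_max lexx.
have traj : forall xq xr u, qsmpc_closed_loop N H Aq Bq h P Q Rw xq xr u ->
  exists J : nat -> R,
    [/\ forall k, J k.+1 <= J k - qform Q (xq k - xr k),
        forall k, qform Q (xq k - xr k) <= J k,
        J 0%N <= N.+1%:R * qform P (xq 0%N - xr 0%N) &
        forall k, xr k.+1 = Aq *m xr k].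
  move=> xq xr u cl.
  have cl' k : [/\ xr k.+1 = Aq *m xr k, xq k.+1 = Aq *m xq k + h *: (Bq *m u k) &
      exists U, mpc_optimal N Aq Bq h Aq P Q Rw (xq k) (xr k) U /\ U 0%N = u k].
    by have [e1 [e2 e3]] := cl k; rewrite -eA in e1 e3; split.
  have cl3 k : exists U, mpc_optimal N Aq Bq h Aq P Q Rw (xq k) (xr k) U /\ U 0%N = u k.
    by have [_ _ e] := cl' k.
  pose Uk k := proj1_sig (cid (cl3 k)).
  have UP k : mpc_optimal N Aq Bq h Aq P Q Rw (xq k) (xr k) (Uk k) /\ Uk k 0%N = u k.
    exact: (proj2_sig (cid (cl3 k))).
  exists (fun k => mpc_cost N Aq Bq h Aq P Q Rw (xq k) (xr k) (Uk k)); split.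
  - move=> k; case: (UP k.+1) => o2 _.
    have [e1 e2 _] := cl' k; rewrite e1 e2 -(UP k).2 in o2 *.
    exact: cost_decrease N1 pP pQ pR nd (UP k).1 o2.
  - by move=> k; exact: cost_lb.
  - exact: cost_ub pP pQ pR nd (UP 0%N).1.
  - by move=> k; have [] := cl' k.
have Jprop : forall (J : nat -> R) (a : nat -> R),
    (forall k, J k.+1 <= J k - a k) -> (forall k, 0 <= a k) ->
    (forall k, J k <= J 0%N) /\ (forall k, series a k <= J 0%N - J k).
  move=> J a dJ a0; split.
    elim=> [|k IH] //; apply: le_trans (dJ k) _; have := a0 k; lra.
  elim=> [|k IH]; first by rewrite /series /= big_geq // subrr.
  rewrite seriesSr; have := dJ k; lra.
split.
- move=> eps eps0.
  pose D1 := N.+1%:R * C.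
  have D10 : 0 <= D1 by rewrite mulr_ge0 // ?ler0n //; lra.
  pose d1 := eps / 2 * c1Q / (c1Q + D1) / 2.
  pose d2 := eps / 2 * c1P / (c1P + C).
  have d10 : 0 < d1.
    by rewrite /d1 !(divr_gt0, mulr_gt0) //; lra.
  have d20 : 0 < d2 by rewrite /d2 !(divr_gt0, mulr_gt0) //; lra.
  exists (Num.min d1 d2); first by rewrite lt_min d10 d20.
  move=> xq xr u cl xq0 xr0 k.
  have [J [dJ lJ uJ exr]] := traj _ _ _ cl.
  have [JJ _] := Jprop J _ dJ (fun k => posdef_ge0 _ pQ).
  have dd1 : Num.min d1 d2 <= d1 by rewrite ge_min lexx.
  have dd2 : Num.min d1 d2 <= d2 by rewrite ge_min lexx orbT.
  have Pxr : forall k, qform P (xr k) <= qform P (xr 0%N).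
    elim=> [|j IH] //; rewrite exr; apply: le_trans (lyap _ nd) _.
    have := posdef_ge0 (xr j) pQ; lra.
  have ek : `|xq k - xr k| < eps / 2.
    apply: (@sq_small _ _ `|xq 0%N - xr 0%N| c1Q D1) => //; first lra.
      apply: le_trans (bQ _).1 _; apply: le_trans (lJ k) _.
      apply: le_trans (JJ k) _; apply: le_trans uJ _.
      rewrite /D1 -mulrA; apply: ler_wpM2l; first exact: ler0n.
      exact: bP'.
    apply: le_trans (ler_normB _ _) _.
    rewrite -/d1 in dd1 *; have : d1 * 2 = eps / 2 * c1Q / (c1Q + D1).
      by rewrite /d1 -mulrA mulVf ?mulr1 // pnatr_eq0.
    lra.
  have rk : `|xr k| < eps / 2.
    apply: (@sq_small _ _ `|xr 0%N| c1P C) => //; try lra.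
      apply: le_trans (bP _).1 _; apply: le_trans (Pxr k) _; exact: bP'.
    rewrite -/d2; lra.
  split; last lra.
  have -> : xq k = (xq k - xr k) + xr k by rewrite subrK.
  apply: le_lt_trans (ler_normD _ _) _; lra.
- move=> xq xr u cl.
  have [J [dJ lJ uJ exr]] := traj _ _ _ cl.
  have [_ sJ] := Jprop J _ dJ (fun k => posdef_ge0 _ pQ).
  have dP k : qform P (xr k.+1) <= qform P (xr k) - qform Q (xr k).
    rewrite exr; exact: lyap.
  have [_ sP] := Jprop _ _ dP (fun k => posdef_ge0 _ pQ).
  have e0 : (fun k => xq k - xr k) @ \oo --> (0 : 'cV[R]_n).
    apply: (@vec_to0 _ _ _ (fun k => qform Q (xq k - xr k)) c1Q) => //.
      by move=> k; exact: (bQ _).1.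
    apply: (@series_to0 _ _ (J 0%N)); first by move=> k; exact: posdef_ge0.
    move=> k; apply: le_trans (sJ k) _.
    have := le_trans (posdef_ge0 (xq k - xr k) pQ) (lJ k); lra.
  have r0 : xr @ \oo --> (0 : 'cV[R]_n).
    apply: (@vec_to0 _ _ _ (fun k => qform Q (xr k)) c1Q) => //.
      by move=> k; exact: (bQ _).1.
    apply: (@series_to0 _ _ (qform P (xr 0%N))); first by move=> k; exact: posdef_ge0.
    move=> k; apply: le_trans (sP k) _.
    have := posdef_ge0 (xr k) pP; lra.
  split => //.
  have -> : (fun k => xq k) = (fun k => (xq k - xr k) + xr k).
    by apply: funext => k; rewrite subrK.
  rewrite -(addr0 (0 : 'cV[R]_n)); exact: cvgD.
Qed.
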